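(* Let $T$ be a minimal homeomorphism of a compact metric space $X$, let $G$ be a locally compact second countable group, and let $f\colon X\to G$ be a continuous regular cocycle. Let $C\subseteq X\times G$ be a surjective $\mathbf T_f$-orbit closure and $H=\mathrm{Stab}(C)$. Then for every point $(x,g)\in C$ whose $\mathbf T_f$-orbit is dense in $C$ we have $C_x=\{g'\in G:(x,g')\in C\}=gH$. Furthermore, the set $C/H=\{(x,gH):(x,g)\in C\}\subseteq X\times G/H$ is compact and $\mathbf T_f\colon C/H\to C/H$, $(x,gH)\mapsto(Tx,f(x)gH)$, is a minimal homeomorphism. In particular, for every $x\in X$ there exists a compact set $K_x\subseteq G$ with $C_x=K_xH$.
   Context: The cocycle is $f(n,x)=f(T^{n-1}x)\cdots f(x)$ for $n\ge1$, $f(0,x)=\mathbf 1_G$, $f(n,x)=f(-n,T^nx)^{-1}$ for $n<0$. The skew product is the homeomorphism $\mathbf T_f(x,g)=(Tx,f(x)g)$ of $X\times G$, so $\mathbf T_f^n(x,g)=(T^nx,f(n,x)g)$. A surjective $\mathbf T_f$-orbit closure is the closure of the $\mathbf T_f$-orbit $\{\mathbf T_f^n(x_0,g_0):n\in\mathbb Z\}$ of a single point which projects onto all of $X$ under the first coordinate projection; $f$ is called regular if such an orbit closure exists. For a closed set $C\subseteq X\times G$, $\mathrm{Stab}(C)=\{h\in G: R_h(C)=C\}$ where $R_h(x,g)=(x,gh^{-1})$; this is a closed subgroup. *)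

(* Defs.v *)
From HB Require Import structures.
From mathcomp Require Import all_boot all_order all_algebra.
From mathcomp Require Import all_classical all_reals all_analysis.
From mathcomp Require Import generic_quotient.

Set Implicit Arguments.
Unset Strict Implicit.
Unset Printing Implicit Defensive.

Import Order.TTheory GRing.Theory Num.Theory.
Local Open Scope classical_set_scope.
Local Open Scope quotient_scope.

Definition topological_group (G : topologicalType)
  (mul : G -> G -> G) (inv : G -> G) (one : G) : Prop :=
  [/\ (forall a b c, mul a (mul b c) = mul (mul a b) c),
      (forall a, mul one a = a /\ mul a one = a),
      (forall a, mul (inv a) a = one /\ mul a (inv a) = one),
      continuous (fun p : G * G => mul p.1 p.2) &
      continuous inv].

Definition lcsc_group (G : topologicalType)
  (mul : G -> G -> G) (inv : G -> G) (one : G) : Prop :=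
  [/\ topological_group mul inv one, hausdorff_space G,
      locally_compact [set: G] & @second_countable G].

Definition lcoset (G : Type) (mul : G -> G -> G) (g : G) (A : set G) : set G :=
  [set mul g a | a in A].
Definition setmul (G : Type) (mul : G -> G -> G) (K A : set G) : set G :=
  [set mul k a | k in K & a in A].

Definition iterZ (Y : Type) (F Finv : Y -> Y) (n : int) (y : Y) : Y :=
  match n with
  | Posz k => iter k F y
  | Negz k => iter k.+1 Finv y
  end.

Definition orbitZ (Y : Type) (F Finv : Y -> Y) (y : Y) : set Y :=
  [set iterZ F Finv n y | n in [set: int]].

Definition homeo_on (Y : topologicalType) (A : set Y) (F Finv : Y -> Y) : Prop :=
  [/\ F @` A `<=` A, Finv @` A `<=` A,
      {in A, cancel F Finv} & {in A, cancel Finv F}] /\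
  ({within A, continuous F} /\ {within A, continuous Finv}).

Definition minimal_on (Y : topologicalType) (A : set Y) (F Finv : Y -> Y) : Prop :=
  forall y, A y -> A `<=` closure (orbitZ F Finv y).

Definition minimal_homeo_on (Y : topologicalType) (A : set Y) (F : Y -> Y) : Prop :=
  exists Finv : Y -> Y, homeo_on A F Finv /\ minimal_on A F Finv.

Section Cocycle.
Variables (X G : Type) (mul : G -> G -> G) (inv : G -> G) (one : G).
Variables (T Tinv : X -> X) (f : X -> G).

Fixpoint cocycle_nat (k : nat) (x : X) : G :=
  match k with
  | 0 => one
  | k'.+1 => mul (f (iter k' T x)) (cocycle_nat k' x)
  end.

Definition cocycle (n : int) (x : X) : G :=
  match n with
  | Posz k => cocycle_nat k x
  | Negz k => inv (cocycle_nat k.+1 (iterZ T Tinv n x))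
  end.

Definition skew_iter (n : int) (p : X * G) : X * G :=
  (iterZ T Tinv n p.1, mul (cocycle n p.1) p.2).

Definition skew (p : X * G) : X * G := (T p.1, mul (f p.1) p.2).

Definition skew_orbit (p : X * G) : set (X * G) :=
  [set skew_iter n p | n in [set: int]].
End Cocycle.

Definition orbit_closure (X G : topologicalType) (mul : G -> G -> G)
  (inv : G -> G) (one : G) (T Tinv : X -> X) (f : X -> G) (p : X * G) :
  set (X * G) := closure (skew_orbit mul inv one T Tinv f p).

Definition surjective_orbit_closure (X G : topologicalType) (mul : G -> G -> G)
  (inv : G -> G) (one : G) (T Tinv : X -> X) (f : X -> G) (C : set (X * G)) :=
  (exists p, C = orbit_closure mul inv one T Tinv f p) /\ fst @` C = [set: X].

Definition regular_cocycle (X G : topologicalType) (mul : G -> G -> G)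
  (inv : G -> G) (one : G) (T Tinv : X -> X) (f : X -> G) :=
  exists C, surjective_orbit_closure mul inv one T Tinv f C.

Definition Stab (X G : Type) (mul : G -> G -> G) (inv : G -> G)
  (C : set (X * G)) : set G :=
  [set h | (fun p : X * G => (p.1, mul p.2 (inv h))) @` C = C].

(* a ~ b iff aH = bH (as sets); this is an equivalence relation for   *)
(* any H, and gives the left coset space G/H when H is a subgroup.    *)
Section CosetSpace.
Variables (G : topologicalType) (mul : G -> G -> G) (H : set G).

Definition coset_rel : rel G :=
  fun a b => `[< lcoset mul a H = lcoset mul b H >].

Lemma coset_rel_refl : reflexive coset_rel.
Proof. by move=> a; apply/asboolP. Qed.
Lemma coset_rel_sym : symmetric coset_rel.
Proof. by move=> a b; apply/idP/idP => /asboolP e; apply/asboolP. Qed.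
Lemma coset_rel_trans : transitive coset_rel.
Proof.
by move=> b a c /asboolP e1 /asboolP e2; apply/asboolP; rewrite e1.
Qed.

Definition coset_equiv : equiv_rel G :=
  EquivRel coset_rel coset_rel_refl coset_rel_sym coset_rel_trans.

Definition coset_space : Type :=
  quotient_topology [the quotType G of {eq_quot coset_equiv}].
End CosetSpace.

Definition coset_proj (G : topologicalType) (mul : G -> G -> G) (H : set G)
  (g : G) : coset_space mul H := \pi_(coset_space mul H) g.

Definition quot_set (X G : topologicalType) (mul : G -> G -> G) (H : set G)
  (C : set (X * G)) : set (X * coset_space mul H) :=
  [set (p.1, coset_proj mul H p.2) | p in C].

Definition skew_quot (X G : topologicalType) (mul : G -> G -> G) (H : set G)
  (T : X -> X) (f : X -> G) (q : X * coset_space mul H) :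
  X * coset_space mul H :=
  (T q.1, coset_proj mul H (mul (f q.1) (repr q.2))).

Arguments coset_space {G} mul H.
Arguments coset_proj {G} mul H g.
Arguments quot_set {X G} mul H C _.
Arguments skew_quot {X G} mul H T f q.

(* Main.v *)
Require Import Defs.
From HB Require Import structures.
From mathcomp Require Import all_boot all_order all_algebra.
From mathcomp Require Import all_classical all_reals all_analysis.
From mathcomp Require Import generic_quotient.
From mathcomp Require Import zify.
Local Open Scope classical_set_scope.

Set Implicit Arguments.
Unset Strict Implicit.
Unset Printing Implicit Defensive.
Import GRing.Theory Num.Theory.
Local Open Scope ring_scope.

Section IterZ.
Context {Y : Type} (F Finv : Y -> Y).
Hypothesis FK : cancel F Finv.
Hypothesis FKinv : cancel Finv F.

Lemma iterZ0 y : iterZ F Finv 0 y = y. Proof. by []. Qed.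

Lemma iterZ_succ (n : int) y : iterZ F Finv (n + 1) y = F (iterZ F Finv n y).
Proof.
case: n => [k|k]; first by have -> : Posz k + 1 = Posz k.+1 by lia.
case: k => [|k]; first by rewrite /= FKinv.
have -> : (Negz k.+1 + 1 = Negz k)%R by rewrite !NegzE; lia.
by rewrite /= FKinv.
Qed.

Lemma iterZ_pred (n : int) y : iterZ F Finv (n - 1) y = Finv (iterZ F Finv n y).
Proof.
have := iterZ_succ (n - 1) y; rewrite GRing.subrK => ->; by rewrite FK.
Qed.

Lemma iterZ_add (m n : int) y :
  iterZ F Finv (m + n) y = iterZ F Finv m (iterZ F Finv n y).
Proof.
elim/int_rect: m => [|k IH|k IH]; first by rewrite GRing.add0r.
  have -> : (k.+1%:Z + n = (k%:Z + n) + 1) by lia.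
  by rewrite iterZ_succ IH -iterZ_succ; congr iterZ; lia.
have -> : (- (k.+1)%:Z = - k%:Z - 1)%R by lia.
by rewrite -addrA (addrC (-1)) addrA !iterZ_pred IH.
Qed.

Lemma iterZ_neg (m : int) y : iterZ F Finv (- m) (iterZ F Finv m y) = y.
Proof. by rewrite -iterZ_add addNr. Qed.

End IterZ.

Lemma cont_comp (A B D : topologicalType) (f : A -> B) (g : B -> D) :
  continuous f -> continuous g -> continuous (g \o f).
Proof. by move=> cf cg x; apply: continuous_comp; [exact: cf|exact: cg]. Qed.

Lemma cont_pair (A B D : topologicalType) (f : A -> B) (g : A -> D) :
  continuous f -> continuous g -> continuous (fun x => (f x, g x)).
Proof. by move=> cf cg x; apply: cvg_pair; [exact: cf|exact: cg]. Qed.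

Lemma cont_fst (A B : topologicalType) : continuous (@fst A B).
Proof. by move=> x; exact: cvg_fst. Qed.

Lemma cont_snd (A B : topologicalType) : continuous (@snd A B).
Proof. by move=> x; exact: cvg_snd. Qed.

Definition group_ax {G : Type} (mul : G -> G -> G) (inv : G -> G) (one : G) :=
  [/\ (forall a b c, mul a (mul b c) = mul (mul a b) c),
      (forall a, mul one a = a), (forall a, mul a one = a),
      (forall a, mul (inv a) a = one) & (forall a, mul a (inv a) = one)].

Section Group.
Context {G : Type} (mul : G -> G -> G) (inv : G -> G) (one : G).
Hypothesis gp : group_ax mul inv one.
Lemma gA a b c : mul a (mul b c) = mul (mul a b) c. Proof. by case: gp. Qed.
Lemma g1l a : mul one a = a. Proof. by case: gp. Qed.
Lemma g1r a : mul a one = a. Proof. by case: gp. Qed.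
Lemma gVl a : mul (inv a) a = one. Proof. by case: gp. Qed.
Lemma gVr a : mul a (inv a) = one. Proof. by case: gp. Qed.

Lemma gKl a b : mul (inv a) (mul a b) = b.
Proof. by rewrite gA gVl g1l. Qed.
Lemma gKVl a b : mul a (mul (inv a) b) = b.
Proof. by rewrite gA gVr g1l. Qed.
Lemma gKr a b : mul (mul b a) (inv a) = b.
Proof. by rewrite -gA gVr g1r. Qed.
Lemma gKVr a b : mul (mul b (inv a)) a = b.
Proof. by rewrite -gA gVl g1r. Qed.
Lemma ginv_uniq a b : mul a b = one -> b = inv a.
Proof. by move=> e; rewrite -[b](gKl a) e g1r. Qed.
Lemma ginvK a : inv (inv a) = a.
Proof. exact/esym/(ginv_uniq (gVl a)). Qed.
Lemma ginvM a b : inv (mul a b) = mul (inv b) (inv a).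
Proof. by apply/esym/ginv_uniq; rewrite -gA (gA b) gVr g1l gVr. Qed.
Lemma ginv1 : inv one = one.
Proof. by apply/esym/ginv_uniq; rewrite g1r. Qed.
Lemma g_injl a b c : mul a b = mul a c -> b = c.
Proof. by move=> e; rewrite -(gKl a b) e gKl. Qed.
Lemma g_injr a b c : mul b a = mul c a -> b = c.
Proof. by move=> e; rewrite -(gKr a b) e gKr. Qed.
End Group.

Section Dyn.
Context {X G : topologicalType} (mul : G -> G -> G) (inv : G -> G) (one : G).
Hypothesis gp : group_ax mul inv one.
Context (T Tinv : X -> X) (f : X -> G).
Hypothesis TK : cancel T Tinv.
Hypothesis TKinv : cancel Tinv T.

Definition Phi (p : X * G) : X * G := (T p.1, mul (f p.1) p.2).
Definition Psi (p : X * G) : X * G := (Tinv p.1, mul (inv (f (Tinv p.1))) p.2).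

Lemma PhiK : cancel Phi Psi.
Proof. by case=> x g; rewrite /Phi /Psi /= TK (gKl gp). Qed.
Lemma PsiK : cancel Psi Phi.
Proof. by case=> x g; rewrite /Phi /Psi /= TKinv (gKVl gp). Qed.

Local Notation cn := (cocycle_nat mul one T f).

Lemma cnSr k y : cn k.+1 y = mul (cn k (T y)) (f y).
Proof.
elim: k y => [|k IH] y; first by rewrite /= (g1r gp) (g1l gp).
have -> : cn k.+2 y = mul (f (iter k.+1 T y)) (cn k.+1 y) by [].
rewrite IH (gA gp) iterSr.
by have -> : cn k.+1 (T y) = mul (f (iter k T (T y))) (cn k (T y)) by [].
Qed.

Lemma iter_Phi k x g : iter k Phi (x, g) = (iter k T x, mul (cn k x) g).
Proof.
elim: k => [|k IH] /=; first by rewrite (g1l gp).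
by rewrite IH /Phi /= (gA gp).
Qed.

Lemma iter_Psi k x g : iter k.+1 Psi (x, g) =
  (iter k.+1 Tinv x, mul (inv (cn k.+1 (iter k.+1 Tinv x))) g).
Proof.
elim: k => [|k IH]; first by rewrite /= /Psi /= (g1r gp).
rewrite iterS IH.
set y := iter k.+1 Tinv x.
have -> : iter k.+2 Tinv x = Tinv y by [].
rewrite (cnSr k.+1 (Tinv y)) TKinv (ginvM gp).
by rewrite /Psi [in LHS]/= (gA gp).
Qed.

Lemma skew_iterE n p : skew_iter mul inv one T Tinv f n p = iterZ Phi Psi n p.
Proof.
case: p => x g; case: n => [k|k]; first by rewrite /= iter_Phi.
by rewrite [RHS]/iterZ iter_Psi.
Qed.

Lemma skew_iter_add m n p :
  skew_iter mul inv one T Tinv f (m + n) p =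
  skew_iter mul inv one T Tinv f m (skew_iter mul inv one T Tinv f n p).
Proof. by rewrite !skew_iterE iterZ_add //; [exact: PhiK|exact: PsiK]. Qed.

Lemma skew_iter_neg m p :
  skew_iter mul inv one T Tinv f (- m) (skew_iter mul inv one T Tinv f m p) = p.
Proof. by rewrite -skew_iter_add addNr skew_iterE. Qed.

Lemma skew_iter_fst n p :
  (skew_iter mul inv one T Tinv f n p).1 = iterZ T Tinv n p.1.
Proof. by []. Qed.

Lemma skew_iter_R n x g a :
  skew_iter mul inv one T Tinv f n (x, mul g a) =
  ((skew_iter mul inv one T Tinv f n (x, g)).1,
   mul (skew_iter mul inv one T Tinv f n (x, g)).2 a).
Proof. by rewrite /skew_iter /= (gA gp). Qed.

Hypothesis contT : continuous T.
Hypothesis contTinv : continuous Tinv.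
Hypothesis contf : continuous f.
Hypothesis contmul : continuous (fun p : G * G => mul p.1 p.2).
Hypothesis continv : continuous inv.

Lemma cont_mul2 (A : topologicalType) (a b : A -> G) :
  continuous a -> continuous b -> continuous (fun x => mul (a x) (b x)).
Proof.
move=> ca cb.
exact: (@cont_comp _ _ _ (fun x => (a x, b x)) (fun p => mul p.1 p.2)
  (cont_pair ca cb) contmul).
Qed.

Lemma cont_Phi : continuous Phi.
Proof.
apply: cont_pair; first exact: (cont_comp (@cont_fst _ _)).
apply: cont_mul2; last exact: cont_snd.
exact: (cont_comp (@cont_fst _ _)).
Qed.

Lemma cont_Psi : continuous Psi.
Proof.
have cT1 : continuous (fun p : X * G => Tinv p.1).
  exact: (cont_comp (@cont_fst _ _)).
apply: cont_pair; first exact: cT1.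
apply: cont_mul2; last exact: cont_snd.
apply: (cont_comp _ continv); exact: (cont_comp cT1 contf).
Qed.

Lemma cont_iter (Y : topologicalType) (F : Y -> Y) k :
  continuous F -> continuous (iter k F).
Proof.
move=> cF; elim: k => [|k IH]; first by move=> x.
exact: (cont_comp IH cF).
Qed.

Lemma cont_iterZ (Y : topologicalType) (F Finv : Y -> Y) n :
  continuous F -> continuous Finv -> continuous (iterZ F Finv n).
Proof. by move=> cF cFi; case: n => k /=; apply: cont_iter. Qed.

Lemma cont_skew_iter n : continuous (skew_iter mul inv one T Tinv f n).
Proof.
have -> : skew_iter mul inv one T Tinv f n = iterZ Phi Psi n.
  by apply: funext => p; exact: skew_iterE.
apply: cont_iterZ; [exact: cont_Phi|exact: cont_Psi].
Qed.

End Dyn.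

Lemma reg_nbhs (T : topologicalType) (x : T) (V : set T) :
  {for x, regular_space T} -> nbhs x V ->
  exists W, [/\ open W, W x & closure W `<=` V].
Proof.
move=> r Vx; have [W Wx sub] := r V Vx.
exists W°; split; [exact: open_interior|exact: nbhs_singleton (nbhs_interior Wx)|].
by move=> y /(closureS (@interior_subset _ W)) /sub.
Qed.

Lemma baire_compact (X : topologicalType) (N : nat -> set X) :
  hausdorff_space X -> compact [set: X] -> (exists x : X, True) ->
  (forall n, closed (N n)) -> (forall n, (N n)° = set0) ->
  exists x, forall n, ~ N n x.
Proof.
move=> hX cX [x0 _] cN iN.
have regX (x : X) : {for x, regular_space X}.
  by apply: (compact_regular hX cX); exact: filterT.
have step : forall (nO : nat * set X), exists W : set X,
    (open nO.2 /\ nO.2 !=set0) ->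
    [/\ open W, W !=set0 & closure W `<=` nO.2 `\` N nO.1].
  case=> n O /=; have [[oO [x Ox]]|] := pselect (open O /\ O !=set0); last first.
    by move=> h; exists set0 => /h.
  have [y [Oy Ny]] : exists y, O y /\ ~ N n y.
    apply: contrapT => hh.
    have sub : O `<=` N n.
      by move=> z Oz; apply: contrapT => nz; apply: hh; exists z.
    have : O `<=` (N n)° by rewrite -open_subsetE.
    by rewrite iN => /(_ x Ox).
  have oD : open (O `\` N n) by apply: openI => //; exact: closed_openC.
  have [W [oW Wy sW]] := reg_nbhs (regX y) (open_nbhs_nbhs (conj oD (conj Oy Ny))).
  by exists W => _; split => //; exists y.
have [st hst] := choice step.
pose W := fix W n := if n is m.+1 then st (n, W m) else st (0%N, [set: X]).
have hW : forall n, [/\ open (W n), W n !=set0 &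
    closure (W n) `<=` (if n is m.+1 then W m else [set: X]) `\` N n].
  elim=> [|n [oW nW cW]]; first by apply: (hst (0%N, _)); split; [exact: openT|exists x0].
  by apply: (hst (n.+1, W n)).
have Wdec : forall n m, (m <= n)%N -> W n `<=` W m.
  move=> n m; elim: n => [|n IH]; first by rewrite leqn0 => /eqP ->.
  rewrite leq_eqVlt => /orP[/eqP ->//|]; rewrite ltnS => /IH sub.
  have [_ _ cW] := hW n.+1.
  by move=> z /(@subset_closure _ (W n.+1)) /cW [/sub].
pose F := filter_from [set: nat] W.
have FF : ProperFilter F.
  apply: filter_from_proper; last by move=> i _; have [] := hW i.
  apply: filter_from_filter; first by exists 0%N.
  move=> i j _ _; exists (maxn i j) => //.
  by move=> z Wz; split; apply: (Wdec (maxn i j)) => //; [exact: leq_maxl|exact: leq_maxr].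
have [p [_ clp]] := cX F FF (filterT).
exists p => n Nnp.
have : closure (W n) p.
  by move=> B Bp; apply: clp => //; exists n.
by have [_ _ cW] := hW n => /cW [].
Qed.

Lemma tube_closed (X G : topologicalType) (K : set G) (M : set (X * G)) :
  compact K -> closed M -> closed [set x | exists2 k, K k & M (x, k)].
Proof.
move=> cK cM; rewrite -openC openE => x nLx.
have hc : forall k, K k -> \forall k' \near k & y \near nbhs x, ~ M (y, k').
  move=> k Kk.
  have : nbhs (x, k) (~` M).
    apply: open_nbhs_nbhs; split; first exact: closed_openC.
    by move=> Mxk; apply: nLx; exists k.
  case=> [[A B]] /= [Ax Bk] sub.
  exists (B, A) => //= -[k' y] /= [Bk' Ay].
  by apply: (sub (y, k')).
have := (compact_near_coveringP K).1 cK X (nbhs x) (fun y k => ~ M (y, k)) (nbhs_filter x) hc.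
move=> Ux; apply: filterS Ux => y sub [k Kk Myk].
by apply: (sub k Kk).
Qed.

Lemma baire_countable (X : topologicalType) (I : Type) (D : set I)
    (h : I -> nat) (S : I -> set X) :
  hausdorff_space X -> compact [set: X] -> (exists x : X, True) ->
  {in D &, injective h} -> (forall i, D i -> closed (S i)) ->
  (forall i, D i -> (S i)° = set0) ->
  exists x, forall i, D i -> ~ S i x.
Proof.
move=> hX cX neX hinj cS iS.
pose N n := [set x | exists i, [/\ D i, h i = n & S i x]].
have NE n : (exists i, [/\ D i, h i = n & N n = S i]) \/ N n = set0.
  have [[i [Di hi]]|no] := pselect (exists i, D i /\ h i = n).
    left; exists i; split => //; apply/seteqP; split => [x [j [Dj hj Sj]]|x Sx].
      suff -> : i = j by [].
      by apply: hinj; rewrite ?inE //; rewrite hi hj.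
    by exists i.
  right; apply/seteqP; split => // x [j [Dj hj _]]; apply: no; by exists j.
have cN n : closed (N n).
  by case: (NE n) => [[i [Di _ ->]]|->]; [exact: cS|exact: closed0].
have iN n : (N n)° = set0.
  case: (NE n) => [[i [Di _ ->]]|->]; first exact: iS.
  by apply/seteqP; split => // y /interior_subset.
have [x hx] := baire_compact hX cX neX cN iN.
exists x => i Di Six; apply: (hx (h i)); by exists i.
Qed.

Lemma boundary_int0 (X : topologicalType) (S : set X) : (S `\` S°)° = set0.
Proof.
apply/seteqP; split => // z iz.
have [_ nz] := interior_subset iz.
apply: nz; move: iz; rewrite /interior => /filterS; apply => y [] //.
Qed.

Lemma compact_int_cover (X : topologicalType) (U : int -> set X) :
  compact [set: X] -> (forall n, open (U n)) -> (forall x, exists n, U n x) ->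
  exists s : seq int, forall x, exists2 n, n \in s & U n x.
Proof.
move=> cX oU cov.
pose F := filter_from [set: seq int] (fun s0 => [set s : seq int | {subset s0 <= s}]).
have FF : Filter F.
  apply: filter_from_filter; first by exists [::].
  move=> i j _ _; exists (i ++ j) => // s hs; split => z zi; apply: hs;
    by rewrite mem_cat zi ?orbT.
have hc : forall x, [set: X] x -> \forall x' \near x & s \near F,
    exists2 n, n \in s & U n x'.
  move=> x _; have [n Unx] := cov x.
  exists (U n, [set s : seq int | {subset [:: n] <= s}]).
    split => /=; first by apply: open_nbhs_nbhs; split.
    by exists [:: n].
  by move=> [x' s] /= [Ux' hs]; exists n => //; apply: hs; rewrite inE.
have := (compact_near_coveringP _).1 cX (seq int) F
  (fun s x => exists2 n, n \in s & U n x) FF hc.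
move=> [s0 _ sQ]; exists s0 => x.
by apply: (sQ s0) => //.
Qed.

Unset Implicit Arguments.
Local Open Scope quotient_scope.

Lemma cont_closure_sub (Y Z : topologicalType) (F : Y -> Z) (A : set Y) (B : set Z) :
  continuous F -> (forall a, A a -> B (F a)) -> closed B ->
  forall a, closure A a -> B (F a).
Proof.
move=> cF AB cB a clA.
have cP : closed (F @^-1` B) by apply: preimage_closed => // y _; exact: cF.
have sub : A `<=` F @^-1` B by move=> y /AB.
by apply: cP; exact: (closureS sub).
Qed.

Section Main.
Context {X G : topologicalType} (mul : G -> G -> G) (inv : G -> G) (one : G).
Hypothesis gp : group_ax mul inv one.
Hypothesis contmul : continuous (fun p : G * G => mul p.1 p.2).
Hypothesis continv : continuous inv.
Context (T Tinv : X -> X) (f : X -> G).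
Hypothesis TK : cancel T Tinv.
Hypothesis TKinv : cancel Tinv T.
Hypothesis contT : continuous T.
Hypothesis contTinv : continuous Tinv.
Hypothesis contf : continuous f.
Context (C : set (X * G)) (x0 : X) (g0 : G).
Hypothesis Cdef : C = orbit_closure mul inv one T Tinv f (x0, g0).
Hypothesis surjC : forall x, exists g, C (x, g).
Hypothesis hG : hausdorff_space G.
Hypothesis lcG : locally_compact [set: G].
Hypothesis scG : @second_countable G.
Hypothesis hX : hausdorff_space X.
Hypothesis cX : compact [set: X].
Hypothesis minT : forall y : X, [set: X] `<=` closure (orbitZ T Tinv y).

Local Notation SI := (skew_iter mul inv one T Tinv f).
Local Notation orb := (skew_orbit mul inv one T Tinv f).
Let mA := @gA _ _ _ _ gp.
Let m1g := @g1l _ _ _ _ gp.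
Let mg1 := @g1r _ _ _ _ gp.
Let mVg := @gVl _ _ _ _ gp.
Let mgV := @gVr _ _ _ _ gp.
Let mKg := @gKl _ _ _ _ gp.
Let mKVg := @gKVl _ _ _ _ gp.
Let mgK := @gKr _ _ _ _ gp.
Let mgKV := @gKVr _ _ _ _ gp.
Let iK := @ginvK _ _ _ _ gp.
Let iM := @ginvM _ _ _ _ gp.

Let SIadd m n p : SI (m + n) p = SI m (SI n p).
Proof. exact: (skew_iter_add gp). Qed.
Let cSI n : continuous (SI n).
Proof. by apply: (cont_skew_iter gp). Qed.
Let cmul2 (A : topologicalType) (a b : A -> G) :
  continuous a -> continuous b -> continuous (fun x => mul (a x) (b x)).
Proof. by move=> ca cb; apply: cont_mul2. Qed.
Let SIR n x g a : SI n (x, mul g a) = ((SI n (x, g)).1, mul (SI n (x, g)).2 a).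
Proof. exact: (skew_iter_R gp). Qed.

Definition Rm (a : G) (p : X * G) : X * G := (p.1, mul p.2 a).

Lemma cont_Rm a : continuous (Rm a).
Proof.
apply: cont_pair; first exact: cont_fst.
exact: (cmul2 _ _ _ (@cont_snd _ _) (fun x => cvg_cst _)).
Qed.

Lemma SI_Rm n a p : SI n (Rm a p) = Rm a (SI n p).
Proof. by case: p => x g; rewrite /Rm /= SIR. Qed.

Lemma orb_SI n p : orb (SI n p) = orb p.
Proof.
apply/seteqP; split => _ [m _ <-].
  by exists (m + n) => //; rewrite SIadd.
exists (m - n) => //; rewrite -SIadd.
by rewrite GRing.subrK.
Qed.

Lemma closure_orb_inv q n r : closure (orb q) r -> closure (orb q) (SI n r).
Proof.
apply: (@cont_closure_sub _ _ _ (orb q) (closure (orb q)) (cSI n)).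
- move=> _ [m _ <-]; apply: subset_closure; by exists (n + m).
- exact: closed_closure.
Qed.

Lemma closedC : closed C.
Proof. by rewrite Cdef; exact: closed_closure. Qed.

Lemma C_SI n r : C r -> C (SI n r).
Proof. by rewrite Cdef; exact: closure_orb_inv. Qed.

Lemma p0C : C (x0, g0).
Proof.
rewrite Cdef; apply: subset_closure; exists 0 => //.
by rewrite /skew_iter /= m1g.
Qed.

Definition Sg k := forall x g, C (x, g) -> C (x, mul g k).

Lemma shift (x : X) (g k : G) : C `<=` closure (orb (x, g)) ->
  C (x, mul g k) -> Sg k.
Proof.
move=> trans Cgk y c /trans.
apply: (@cont_closure_sub _ _ _ _ C (cont_Rm k) _ closedC).
move=> _ [n _ <-]; rewrite -SI_Rm; exact: C_SI.
Qed.

Local Notation H := (Stab mul inv C).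

Lemma H_Sg h : H h <-> Sg (inv h) /\ Sg h.
Proof.
rewrite /Stab /=; split.
  move=> e; split.
    by move=> x g Cxg; rewrite -e; exists (x, g).
  move=> x g; rewrite -{1}e => -[[x' g'] Cp [<- <-]] /=.
  by rewrite mgKV.
case=> S1 S2; apply/seteqP; split.
  by move=> _ [[x g] Cxg <-]; exact: S1.
move=> [x g] Cxg; exists (x, mul g h); first exact: S2.
by rewrite /= mgK.
Qed.

Lemma Sg_mul a b : Sg a -> Sg b -> Sg (mul a b).
Proof. by move=> Sa Sb x g /Sa /Sb; rewrite -mA. Qed.

Lemma Sg_one : Sg one.
Proof. by move=> x g; rewrite mg1. Qed.

Lemma H_inv h : H h -> H (inv h).
Proof. by move=> /H_Sg [S1 S2]; apply/H_Sg; rewrite iK. Qed.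

Lemma H_mul a b : H a -> H b -> H (mul a b).
Proof.
move=> /H_Sg [Sa1 Sa2] /H_Sg [Sb1 Sb2]; apply/H_Sg; split; last exact: Sg_mul.
by rewrite iM; exact: Sg_mul.
Qed.

Lemma H_one : H one.
Proof.
apply/H_Sg; split; last exact: Sg_one.
have -> : inv one = one by apply: (@ginv1 _ _ _ _ gp).
exact: Sg_one.
Qed.

Lemma closed_Sg : closed [set k | Sg k].
Proof.
have -> : [set k | Sg k] = \bigcap_(p in C) [set k | C (p.1, mul p.2 k)].
  apply/seteqP; split => [k Sk [x g] Cp|k Hk x g Cxg]; first exact: Sk.
  exact: (Hk (x, g)).
apply: closed_bigI => -[x g] _.
have cf : continuous (fun k : G => (x, mul g k)).
  apply: cont_pair; first by move=> z; exact: cvg_cst.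
  by apply: (cmul2 _ _ _ (fun _ => cvg_cst _)) => z.
exact: ((continuous_closedP _).1 cf _ closedC).
Qed.

Lemma closed_H : closed H.
Proof.
have -> : H = inv @^-1` [set k | Sg k] `&` [set k | Sg k].
  by apply/seteqP; split => h /H_Sg.
apply: closedI; last exact: closed_Sg.
exact: ((continuous_closedP _).1 continv _ closed_Sg).
Qed.

Definition goodM (M : set (X * G)) (x : X) :=
  forall g', M (x, g') -> forall B, nbhs g' B ->
    \forall y \near x, exists2 c, B c & M (y, c).

Lemma SI_pair n y c :
  SI n (y, c) = (iterZ T Tinv n y, mul (cocycle mul inv one T Tinv f n y) c).
Proof. by []. Qed.

Lemma lemmaA (M : set (X * G)) (x : X) (g g' : G) :
  closed M -> (forall n r, M r -> M (SI n r)) -> goodM M x ->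
  C (x, g) -> M (x, g') -> M (x0, mul g0 (mul (inv g) g')).
Proof.
move=> cM inM gx Cxg Mxg'.
have cM' : closed [set c | M (x0, c)].
  have cf : continuous (fun c : G => (x0, c)).
    by apply: cont_pair => z; [exact: cvg_cst|exact: cvg_id].
  exact: ((continuous_closedP _).1 cf _ cM).
apply: cM' => W Ww.
pose th := fun p : G * G => mul g0 (mul (inv p.1) p.2).
have cth : continuous th.
  apply: (cmul2 _ _ _ (fun _ => cvg_cst _)).
  apply: cmul2; last exact: cont_snd.
  exact: (cont_comp (@cont_fst _ _) continv).
have : nbhs (g, g') (th @^-1` W) by apply: (cth (g, g')).
case=> [[A B]] /= [Ag Bg'] sAB.
have Ux := gx g' Mxg' B Bg'.
move: Cxg; rewrite Cdef => /(_ [set p | (fun y => exists2 c, B c & M (y, c)) p.1 /\ A p.2]).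
case.
  by exists (fun y => exists2 c, B c & M (y, c), A).
move=> _ [[m _ <-]] [[c Bc Mc] Am].
set u := (SI m (x0, g0)).2 in Am.
have eq0 := @skew_iter_neg _ _ _ _ _ gp _ _ f TK TKinv m (x0, g0).
have r := inM (- m) _ Mc.
rewrite SI_pair in r.
have e1 : iterZ T Tinv (- m) (SI m (x0, g0)).1 = x0 by exact: (f_equal fst eq0).
have e2 : mul (cocycle mul inv one T Tinv f (- m) (SI m (x0, g0)).1) u = g0.
  exact: (f_equal snd eq0).
have ec : cocycle mul inv one T Tinv f (- m) (SI m (x0, g0)).1 = mul g0 (inv u).
  by rewrite -e2 mgK.
rewrite e1 ec in r; exists (mul (mul g0 (inv u)) c); split => //.
rewrite -mA; exact: (sAB (u, c) (conj Am Bc)).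
Qed.

Lemma basis_cpt (B : set (set G)) : basis B ->
  forall g V, nbhs g V ->
  exists b, [/\ B b, b g, compact (closure b) & closure b `<=` V].
Proof.
move=> [_ bB] g V gV.
have [P Pg [cP clP]] := lcG g I.
have Pg' : nbhs g P.
  by move: Pg; rewrite /within /= => /filterS; apply => z; apply.
have rg := compact_regular hG cP Pg'.
have [W [oW Wg sW]] := reg_nbhs rg (filterI gV Pg').
have [b [Bb bg] bW] := bB g W (open_nbhs_nbhs (conj oW Wg)).
have sb : closure b `<=` V `&` P.
  by move=> z /(closureS bW) /sW.
exists b; split => //; last by move=> z /sb [].
apply: (subclosed_compact _ cP); first exact: closed_closure.
by move=> z /sb [].
Qed.

Lemma good_exists (M : set (X * G)) : closed M -> exists x, goodM M x.
Proof.
move=> cM; have [B cB bB] := scG.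
have /countable_injP [h hinj] := cB.
pose D b := B b /\ compact (closure b).
pose L b := [set x | exists2 k, closure b k & M (x, k)].
have cL b : D b -> closed (L b) by move=> [_ cb]; exact: tube_closed.
have := @baire_countable X _ D h (fun b => L b `\` (L b)°) hX cX _ _ _ _.
case.
- by exists x0.
- move=> b b' /set_mem [Bb _] /set_mem [Bb' _] e.
  by apply: hinj => //; exact: mem_set.
- move=> b Db; apply: closedI; first exact: cL.
  exact: open_closedC (@open_interior _ _).
- by move=> b _; exact: boundary_int0.
move=> x hx; exists x => g' Mxg' B0 B0g'.
have [b [Bb bg' cb sb]] := basis_cpt _ bB _ _ B0g'.
have Lx : L b x by exists g' => //; exact: subset_closure.
have : (L b)° x.
  by apply: contrapT => nix; apply: (hx b).
rewrite /interior /=; apply: filterS => y [k clk Myk].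
by exists k => //; exact: sb.
Qed.

Lemma K_exists : exists K : set G, compact K /\ forall x, exists2 k, K k & C (x, k).
Proof.
have [B cB bB] := scG.
have /countable_injP [h hinj] := cB.
pose D b := B b /\ compact (closure b).
pose L b := [set x | exists2 k, closure b k & C (x, k)].
have cL b : D b -> closed (L b) by move=> [_ cb]; apply: tube_closed => //; exact: closedC.
have [b [Db [z Uz]]] : exists b, D b /\ (L b)° !=set0.
  apply: contrapT => hno.
  have := @baire_countable X _ D h L hX cX _ _ cL _.
  case.
  - by exists x0.
  - move=> b b' /set_mem [Bb _] /set_mem [Bb' _] e.
    by apply: hinj => //; exact: mem_set.
  - move=> b Db; apply/seteqP; split => // y Ly; apply: hno; exists b; split => //.
    by exists y.
  move=> x hx; have [g Cxg] := surjC x.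
  have [b [Bb bg cb _]] := basis_cpt _ bB g setT filterT.
  by apply: (hx b) => //; exists g => //; exact: subset_closure.
pose U := (L b)°.
have oU : open U := @open_interior _ _.
have cov : forall x, exists n, (iterZ T Tinv n @^-1` U) x.
  move=> x; have := minT x z I => /(_ U).
  case; first exact: open_nbhs_nbhs.
  by move=> _ [[n _ <-] Un]; exists n.
have := compact_int_cover cX _ cov.
case.
  move=> n; apply: (open_comp _ oU) => y _.
  by apply: cont_iterZ.
move=> D' covD'.
pose Kn n := [set (SI (- n) q).2 | q in [set: X] `*` closure b].
exists (\bigcup_(n in [set` D']) Kn n); split.
  rewrite bigcup_seq; apply: bigsetU_compact => n _.
  apply: continuous_compact; last by apply: compact_setX => //; case: Db.
  apply: continuous_subspaceT => q.
  exact: (@continuous_comp _ _ _ (SI (- n)) snd q (cSI (- n) q) (@cont_snd _ _ _)).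
move=> x; have [n D'n Un] := covD' x.
have [k clk Ck] := interior_subset Un.
have Cr := C_SI (- n) _ Ck.
have e : iterZ T Tinv (- n) (iterZ T Tinv n x) = x.
  by apply: iterZ_neg.
exists (SI (- n) (iterZ T Tinv n x, k)).2.
  by exists n => //; exists (iterZ T Tinv n x, k).
by move: Cr; rewrite SI_pair /= e.
Qed.

Lemma trans_p0 : C `<=` closure (orb (x0, g0)).
Proof. by rewrite Cdef. Qed.

Lemma Sg_inv k : Sg k -> Sg (inv k).
Proof.
move=> Sk; have [x gx] := good_exists C closedC.
have [u Cxu] := surjC x.
have := lemmaA C x (mul u k) u closedC C_SI gx (Sk x u Cxu) Cxu.
rewrite iM mgKV => Cx0.
exact: (shift x0 g0 (inv k) trans_p0 Cx0).
Qed.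

Lemma transH x g g' : C `<=` closure (orb (x, g)) -> C (x, g') ->
  H (mul (inv g) g').
Proof.
move=> tr Cxg'; have Sk : Sg (mul (inv g) g').
  by apply: (shift x g _ tr); rewrite mKVg.
by apply/H_Sg; split => //; exact: Sg_inv.
Qed.

Lemma trans_orbit n : C `<=` closure (orb (SI n (x0, g0))).
Proof. by rewrite orb_SI; exact: trans_p0. Qed.

Lemma decomp (K : set G) : compact K -> (forall x, exists2 k, K k & C (x, k)) ->
  forall x g, C (x, g) -> exists k, [/\ K k, C (x, k) & H (mul (inv g) k)].
Proof.
move=> cK hK x g Cxg; apply: contrapT => hno.
have hc : forall k, K k -> \forall k' \near k & p \near nbhs (x, g),
    ~ (C (p.1, k') /\ H (mul (inv p.2) k')).
  move=> k Kk.
  have [nC|nH] : ~ C (x, k) \/ ~ H (mul (inv g) k).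
    apply: contrapT => /not_orP [/contrapT Ck /contrapT Hk].
    by apply: hno; exists k.
  - have : nbhs (x, k) (~` C).
      by apply: open_nbhs_nbhs; split => //; exact: closed_openC closedC.
    case=> [[A B']] /= [Ax Bk] sub.
    exists (B', [set p : X * G | A p.1]).
      by split => //=; exact: (@cont_fst X G (x, g) A Ax).
    by move=> [k' [y c]] /= [Bk' Ay] [Cyk' _]; apply: (sub (y, k')).
  - have : nbhs (mul (inv g) k) (~` H).
      by apply: open_nbhs_nbhs; split => //; exact: closed_openC closed_H.
    pose th := fun q : G * G => mul (inv q.1) q.2.
    have cth : continuous th.
      apply: cmul2; last exact: cont_snd.
      exact: (cont_comp (@cont_fst _ _) continv).
    move=> /(cth (g, k)); case=> [[A B']] /= [Ag Bk] sub.
    exists (B', [set p : X * G | A p.2]).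
      by split => //=; exact: (@cont_snd X G (x, g) A Ag).
    by move=> [k' [y c]] /= [Bk' Ac] [_ Hk']; apply: (sub (c, k')).
have := (compact_near_coveringP K).1 cK _ (nbhs (x, g))
  (fun p k => ~ (C (p.1, k) /\ H (mul (inv p.2) k))) (nbhs_filter _) hc.
move=> V.
move: Cxg; rewrite Cdef => /(_ _ V) [_ [[n _ <-] Vn]].
set q := SI n (x0, g0) in Vn.
have [k Kk Cqk] := hK q.1.
have tr : C `<=` closure (orb (q.1, q.2)).
  by rewrite -surjective_pairing; exact: trans_orbit.
have Hk := transH q.1 q.2 k tr Cqk.
exact: (Vn k Kk (conj Cqk Hk)).
Qed.

Definition Aq (q : X * G) := [set p | exists a n, H a /\ p = Rm a (SI n q)].

Lemma min_mod (K : set G) : compact K -> (forall x, exists2 k, K k & C (x, k)) ->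
  forall q, C q -> C `<=` closure (Aq q).
Proof.
move=> cK hK q Cq.
pose M := closure (Aq q).
have cM : closed M := @closed_closure _ _.
have AqC : Aq q `<=` C.
  move=> _ [a [n [Ha ->]]]; have /H_Sg [_ Sa] := Ha.
  by case E : (SI n q) (C_SI n _ Cq) => [y c] Cyc; apply: Sa.
have MC : M `<=` C by move=> p /(closureS AqC); apply: closedC.
have invM : forall m r, M r -> M (SI m r).
  move=> m r; apply: (@cont_closure_sub _ _ _ (Aq q) M (cSI m)) => //.
  move=> _ [a [n [Ha ->]]]; apply: subset_closure; exists a, (m + n); split => //.
  by rewrite SI_Rm SIadd.
have proj : forall z, exists c, M (z, c).
  have cZ : closed [set y | exists2 k, K k & M (y, k)] by exact: tube_closed.
  move=> z; suff : [set y | exists2 k, K k & M (y, k)] z by case=> k _ Mk; exists k.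
  apply: cZ; apply: (closureS _ (minT q.1 z I)) => _ [n _ <-].
  have := C_SI n _ Cq; case E : (SI n q) => [y c] Cyc.
  have [k [Kk Cyk Hk]] := decomp K cK hK y c Cyc.
  exists k => //; apply: subset_closure; exists (mul (inv c) k), n; split => //.
  have -> : iterZ T Tinv n q.1 = y by rewrite -[y]/((y, c).1) -E.
  by rewrite E /Rm /= mKVg.
have [x gx] := good_exists M cM.
have [g' Mxg'] := proj x.
have := lemmaA M x g' g' cM invM gx (MC _ Mxg') Mxg'.
rewrite mVg mg1 => Mp0.
have orbM : orb (x0, g0) `<=` M by move=> _ [n _ <-]; exact: invM.
by rewrite Cdef => p /(closureS orbM); apply: cM.
Qed.

Local Notation pi := (coset_proj mul H).
Definition pih (p : X * G) : X * coset_space mul H := (p.1, pi p.2).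

Lemma piE a b : pi a = pi b <-> H (mul (inv a) b).
Proof.
have -> : (pi a = pi b) = (a = b %[mod {eq_quot coset_equiv mul H}]) by [].
split => [/eqquotP/asboolP e|Hab].
  have : lcoset mul b H b by exists one; [exact: H_one|exact: mg1].
  rewrite -e => -[h Hh <-]; by rewrite mKg.
apply/eqquotP/asboolP; apply/seteqP; split => _ [h Hh <-].
  exists (mul (inv (mul (inv a) b)) h); first by apply: H_mul => //; exact: H_inv.
  by rewrite iM iK mA mKVg.
exists (mul (mul (inv a) b) h); first exact: H_mul.
by rewrite mA mKVg.
Qed.

Lemma piR c a : H a -> pi (mul c a) = pi c.
Proof. by move=> Ha; apply/piE; rewrite iM -mA mVg mg1; exact: H_inv. Qed.

Lemma pi_repr a g : pi (mul a (repr (pi g))) = pi (mul a g).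
Proof.
apply/piE; rewrite iM -mA mKg.
have : pi (repr (pi g)) = pi g by rewrite /coset_proj reprK.
by move/piE.
Qed.

Definition Phq := skew_quot mul H T f.
Definition Psq (q : X * coset_space mul H) : X * coset_space mul H :=
  (Tinv q.1, pi (mul (inv (f (Tinv q.1))) (repr q.2))).

Lemma SI0 p : SI 0 p = p.
Proof. by case: p => x g; rewrite /skew_iter /= m1g. Qed.

Lemma Phq_pih p : Phq (pih p) = pih (SI 1 p).
Proof.
case: p => x g; rewrite /Phq /skew_quot /pih /skew_iter /=.
by rewrite pi_repr mg1.
Qed.

Lemma Psq_pih p : Psq (pih p) = pih (SI (- 1) p).
Proof.
case: p => x g; rewrite /Psq /pih /skew_iter /=.
by rewrite pi_repr mg1.
Qed.

Lemma pih_repr (q : X * coset_space mul H) : q = pih (q.1, repr q.2).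
Proof. by case: q => x w; rewrite /pih /= /coset_proj reprK. Qed.

Lemma iter_quot n p : iterZ Phq Psq n (pih p) = pih (SI n p).
Proof.
case: n => k.
  elim: k => [|k IH]; first by rewrite SI0.
  have -> : (Posz k.+1 = 1 + Posz k) by lia.
  by rewrite SIadd /= -Phq_pih -IH.
elim: k => [|k IH]; first by rewrite /= Psq_pih.
have -> : (Negz k.+1 = - 1 + Negz k) by rewrite !NegzE; lia.
by rewrite SIadd -Psq_pih -IH.
Qed.

Lemma PhqK : cancel Phq Psq.
Proof.
move=> q; rewrite [q in Phq q]pih_repr Phq_pih Psq_pih -SIadd.
by rewrite addNr SI0 -pih_repr.
Qed.

Lemma PsqK : cancel Psq Phq.
Proof.
move=> q; rewrite [q in Psq q]pih_repr Psq_pih Phq_pih -SIadd.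
by rewrite addrN SI0 -pih_repr.
Qed.

Lemma cont_pi : continuous pi.
Proof. exact: pi_continuous. Qed.

Lemma cont_pih : continuous pih.
Proof.
apply: cont_pair; first exact: cont_fst.
exact: (cont_comp (@cont_snd _ _) cont_pi).
Qed.

Lemma pi_open (V : set G) : open V -> open (pi @` V).
Proof.
move=> oV.
suff : open (pi @^-1` (pi @` V)) by [].
have -> : pi @^-1` (pi @` V) =
    \bigcup_(a in H) ((fun g => mul g (inv a)) @^-1` V).
  apply/seteqP; split => g.
    case=> v Vv /piE Hvg; exists (mul (inv v) g) => //=.
    by rewrite iM iK mKVg.
  case=> a Ha /= Va; exists (mul g (inv a)) => //.
  by rewrite piR //; exact: H_inv.
apply: bigcup_open => a Ha.
apply: (open_comp _ oV) => g _.
exact: (cmul2 _ _ _ (fun z => cvg_id) (fun z => cvg_cst _)).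
Qed.

Lemma cont_lift (Z : topologicalType) (Fq : X * coset_space mul H -> Z) :
  continuous (Fq \o pih) -> continuous Fq.
Proof.
move=> cF [x w] N NF.
pose p := (x, repr w).
have e : (x, w) = pih p by rewrite /pih /= /coset_proj reprK.
have : nbhs p ((Fq \o pih) @^-1` N) by apply: cF; rewrite /= -e.
case=> [[U V]] /= [Up Vp] sub.
rewrite e; exists (U, pi @` V°).
  split; first exact: Up.
  apply: open_nbhs_nbhs; split; first exact/pi_open/open_interior.
  by exists (repr w) => //; exact: nbhs_singleton (nbhs_interior Vp).
move=> [y w'] /= [Uy [v Vv <-]].
exact: (sub (y, v) (conj Uy (interior_subset Vv))).
Qed.

Lemma cont_Phq : continuous Phq.
Proof.
apply: cont_lift.
have -> : Phq \o pih = pih \o SI 1 by apply: funext => p; exact: Phq_pih.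
exact: (cont_comp (cSI 1) cont_pih).
Qed.

Lemma cont_Psq : continuous Psq.
Proof.
apply: cont_lift.
have -> : Psq \o pih = pih \o SI (- 1) by apply: funext => p; exact: Psq_pih.
exact: (cont_comp (cSI (- 1)) cont_pih).
Qed.

Lemma homeo_qs : homeo_on (quot_set mul H C) Phq Psq.
Proof.
split; split.
- move=> _ [_ [p Cp <-] <-]; exists (SI 1 p); first exact: C_SI.
  exact: (esym (Phq_pih p)).
- move=> _ [_ [p Cp <-] <-]; exists (SI (- 1) p); first exact: C_SI.
  exact: (esym (Psq_pih p)).
- by move=> q _; exact: PhqK.
- by move=> q _; exact: PsqK.
- exact: (continuous_subspaceT cont_Phq).
- exact: (continuous_subspaceT cont_Psq).
Qed.

Lemma minimal_qs : minimal_on (quot_set mul H C) Phq Psq.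
Proof.
move=> _ [q Cq <-] _ [r Cr <-].
have [K [cK hK]] := K_exists.
have := min_mod K cK hK q Cq r Cr.
apply: (@cont_closure_sub _ _ pih (Aq q) (closure (orbitZ Phq Psq (pih q))) cont_pih).
- move=> _ [a [n [Ha ->]]]; apply: subset_closure.
  exists n => //; rewrite iter_quot; case: (SI n q) => y c.
  by rewrite /pih /Rm /= piR.
- exact: closed_closure.
Qed.

Lemma compact_qs : compact (quot_set mul H C).
Proof.
have [K [cK hK]] := K_exists.
have -> : quot_set mul H C = pih @` ([set: X] `*` K `&` C).
  apply/seteqP; split.
    move=> _ [[x g] Cxg <-].
    have [k [Kk Cxk Hk]] := decomp K cK hK x g Cxg.
    exists (x, k) => //; rewrite /pih /=; congr pair.
    by apply/esym/piE.
  by move=> _ [p [_ Cp] <-]; exists p.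
apply: continuous_compact; first exact: continuous_subspaceT cont_pih.
apply: compact_closedI; last exact: closedC.
exact: compact_setX.
Qed.

Lemma part1 x g : C (x, g) -> C `<=` closure (orb (x, g)) ->
  [set g' | C (x, g')] = lcoset mul g H.
Proof.
move=> Cxg tr; apply/seteqP; split => g'.
  move=> /= Cxg'; exists (mul (inv g) g'); first exact: transH tr Cxg'.
  by rewrite mKVg.
case=> a Ha <-; have /H_Sg [_ Sa] := Ha; exact: Sa.
Qed.

Lemma part4 x : exists K : set G, compact K /\ [set g' | C (x, g')] = setmul mul K H.
Proof.
have [K [cK hK]] := K_exists.
exists [set k | K k /\ C (x, k)]; split.
  apply: (compact_closedI cK).
  have cf : continuous (fun k : G => (x, k)).
    by apply: cont_pair => z; [exact: cvg_cst|exact: cvg_id].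
  exact: ((continuous_closedP _).1 cf _ closedC).
apply/seteqP; split => g.
  move=> /= Cxg; have [k [Kk Cxk Hk]] := decomp K cK hK x g Cxg.
  exists k => //; exists (inv (mul (inv g) k)); first exact: H_inv.
  by rewrite iM iK mKVg.
move=> [k [Kk Cxk] [a Ha <-]]; have /H_Sg [_ Sa] := Ha; exact: Sa.
Qed.

Lemma main_all :
  [/\ (forall x g, C (x, g) ->
         C `<=` orbit_closure mul inv one T Tinv f (x, g) ->
         [set g' | C (x, g')] = lcoset mul g H),
      compact (quot_set mul H C),
      minimal_homeo_on (quot_set mul H C) (skew_quot mul H T f) &
      (forall x, exists K : set G,
         compact K /\ [set g' | C (x, g')] = setmul mul K H)].
Proof.
split.
- by move=> x g Cxg tr; apply: part1.
- exact: compact_qs.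
- by exists Psq; split; [exact: homeo_qs|exact: minimal_qs].
- exact: part4.
Qed.

End Main.

Close Scope quotient_scope.
Close Scope ring_scope.

Theorem theorem2p1 (R : realType) (X : metricType R) (G : topologicalType)
  (mul : G -> G -> G) (inv : G -> G) (one : G)
  (T Tinv : X -> X) (f : X -> G) (C : set (X * G)) :
  (* X compact metric, T a minimal homeomorphism with inverse Tinv *)
  compact [set: X] ->
  homeo_on [set: X] T Tinv -> minimal_on [set: X] T Tinv ->
  (* G a locally compact second countable group *)
  lcsc_group mul inv one ->
  (* f a continuous regular cocycle *)
  continuous f ->
  regular_cocycle mul inv one T Tinv f ->
  (* C a surjective T_f-orbit closure *)
  surjective_orbit_closure mul inv one T Tinv f C ->
  let H := Stab mul inv C in
  [/\ (forall x g, C (x, g) ->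
         C `<=` orbit_closure mul inv one T Tinv f (x, g) ->
         [set g' | C (x, g')] = lcoset mul g H),
      compact (quot_set mul H C),
      minimal_homeo_on (quot_set mul H C) (skew_quot mul H T f) &
      (forall x, exists K : set G,
         compact K /\ [set g' | C (x, g')] = setmul mul K H)].
Proof.
move=> cX [[_ _ TK TKinv] [cT cTinv]] minT [tg hG lcG scG] cf _ [[[x0 g0] Cdef] surj] H.
have TK' : cancel T Tinv by move=> x; apply: TK; rewrite in_setT.
have TKinv' : cancel Tinv T by move=> x; apply: TKinv; rewrite in_setT.
have cT' : continuous T by apply/continuous_subspace_setT.
have cTinv' : continuous Tinv by apply/continuous_subspace_setT.
case: tg => mA m1 mV cmul cinv.
have gp : group_ax mul inv one.
  by split => // a; [case: (m1 a)|case: (m1 a)|case: (mV a)|case: (mV a)].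
have surjC : forall x, exists g, C (x, g).
  move=> x; have : (fst @` C) x by rewrite surj.
  by case=> -[y g] Cyg /= <-; exists g.
have minT' : forall y : X, [set: X] `<=` closure (orbitZ T Tinv y).
  by move=> y; apply: minT.
exact: (@main_all X G mul inv one gp cmul cinv T Tinv f TK' TKinv' cT' cTinv' cf
  C x0 g0 Cdef surjC hG lcG scG (@metric_hausdorff _ X) cX minT').
Qed.
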